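(* Let $\Delta,\Sigma$ be alphabets and $\varphi:\Delta\to2^{\Sigma^*}$ a regular language substitution. Let $L\subseteq\Delta^*$ be a union-free language of the form $L=N_1S_1^\star N_2\cdots N_mS_m^\star N_{m+1}$ with words $N_h\in\Delta^*$ and union-free languages $S_h\subseteq\Delta^*$. If $\varepsilon\in\varphi(w)$ for all $w\in S_h$ and all $h\in\{1,\dots,m\}$, then $L$ has 1-word summaries.
   Context: A regular language substitution $\varphi:\Delta\to2^{\Sigma^*}$ maps each symbol to a regular language over $\Sigma$, extended to words by $\varphi(\varepsilon)=\{\varepsilon\}$, $\varphi(\delta w)=\varphi(\delta)\varphi(w)$, and to sets of words by $\varphi(L)=\bigcup_{w\in L}\varphi(w)$. A language is union-free if it is denoted by a regular expression using only symbols, concatenation and Kleene star (no union). A language $L\subseteq\Delta^*$ has 1-word summaries if for every finite subset $F\subseteq L$ there exists a word $w\in L$ with $\varphi(F)\subseteq\varphi(w)$. *)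

(* Defs.v *)
From mathcomp Require Import all_boot.
From Stdlib Require Lists.List.
Set Implicit Arguments. Unset Strict Implicit. Unset Printing Implicit Defensive.

Definition lang (T : Type) := seq T -> Prop.

Definition lword (T : Type) (u : seq T) : lang T := fun w => w = u.
Definition lcat (T : Type) (A B : lang T) : lang T :=
  fun w => exists u v, w = u ++ v /\ A u /\ B v.
Definition lstar (T : Type) (A : lang T) : lang T :=
  fun w => exists ws : seq (seq T), (forall x, Stdlib.Lists.List.In x ws -> A x) /\ w = flatten ws.
Definition lunion (T : Type) (A B : lang T) : lang T := fun w => A w \/ B w.
Definition lvoid (T : Type) : lang T := fun _ => False.

Inductive regex (T : Type) :=
| RVoid | REps | RSym of T | RPlus of regex T & regex T
| RCat of regex T & regex T | RStar of regex T.

Fixpoint rlang (T : Type) (r : regex T) : lang T :=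
  match r with
  | RVoid => @lvoid T
  | REps => @lword T [::]
  | RSym a => lword [:: a]
  | RPlus r1 r2 => lunion (rlang r1) (rlang r2)
  | RCat r1 r2 => lcat (rlang r1) (rlang r2)
  | RStar r1 => lstar (rlang r1)
  end.

Definition regular (T : Type) (A : lang T) : Prop :=
  exists r : regex T, forall w, rlang r w <-> A w.

Inductive ufregex (T : Type) :=
| UFSym of T | UFCat of ufregex T & ufregex T | UFStar of ufregex T.

Fixpoint uflang (T : Type) (r : ufregex T) : lang T :=
  match r with
  | UFSym a => lword [:: a]
  | UFCat r1 r2 => lcat (uflang r1) (uflang r2)
  | UFStar r1 => lstar (uflang r1)
  end.

Definition union_free (T : Type) (A : lang T) : Prop :=
  exists r : ufregex T, forall w, uflang r w <-> A w.

Fixpoint subst_word (D S : Type) (phi : D -> lang S) (w : seq D) : lang S :=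
  match w with
  | [::] => @lword S [::]
  | d :: w' => lcat (phi d) (subst_word phi w')
  end.

Definition subst_lang (D S : Type) (phi : D -> lang S) (L : lang D) : lang S :=
  fun x => exists w, L w /\ subst_word phi w x.

Definition regular_subst (D S : Type) (phi : D -> lang S) : Prop :=
  forall d, regular (phi d).

Definition one_word_summaries (D S : Type) (phi : D -> lang S) (L : lang D) : Prop :=
  forall F : seq (seq D), (forall u, Stdlib.Lists.List.In u F -> L u) ->
    exists w, L w /\
      (forall x, subst_lang phi (fun u => Stdlib.Lists.List.In u F) x -> subst_word phi w x).

(* The language N_1 S_1^* N_2 ... N_m S_m^* N_{m+1}, given by the list
   NS = [:: (N_1, S_1); ...; (N_m, S_m)] and the final word N_{m+1}. *)
Fixpoint block_lang (D : Type) (NS : seq (seq D * ufregex D)) (Nlast : seq D) : lang D :=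
  match NS with
  | [::] => lword Nlast
  | (N, Sr) :: NS' => lcat (lword N) (lcat (lstar (uflang Sr)) (block_lang NS' Nlast))
  end.

(* Main.v *)
Require Import Defs.
From mathcomp Require Import all_boot.

Lemma sw_cat (D S : Type) (phi : D -> lang S) (u v : seq D) x :
  subst_word phi (u ++ v) x <->
  exists x1 x2, x = x1 ++ x2 /\ subst_word phi u x1 /\ subst_word phi v x2.
Proof.
elim: u x => [|d u IH] x /=.
  split.
  - move=> H; exists [::], x; split => //.
  - by move=> [x1 [x2 [-> [-> H]]]].
split.
- move=> [y1 [y2 [-> [H1 H2]]]].
  have [z1 [z2 [-> [Hz1 Hz2]]]] := (proj1 (IH y2) H2).
  exists (y1 ++ z1), z2; rewrite catA; split => //; split => //.
  by exists y1, z1.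
- move=> [x1 [x2 [-> [[y1 [y2 [-> [H1 H2]]]] Hx2]]]].
  exists y1, (y2 ++ x2); rewrite catA; split => //; split => //.
  by apply/IH; exists y2, x2.
Qed.

Lemma eps_star (D S : Type) (phi : D -> lang S) (Sr : ufregex D) s :
  (forall w, uflang Sr w -> subst_word phi w [::]) ->
  lstar (uflang Sr) s -> subst_word phi s [::].
Proof.
move=> He [ws [Hws ->]].
elim: ws Hws => [|w ws IH] Hws /=; first by [].
apply/sw_cat; exists [::], [::]; split => //; split.
- by apply: He; apply: Hws; left.
- by apply: IH => y Hy; apply: Hws; right.
Qed.

Lemma block_nonempty (D : Type) (NS : seq (seq D * ufregex D)) Nlast :
  exists w, block_lang NS Nlast w.
Proof.
elim: NS => [|[N Sr] NS [w Hw]] /=; first by exists Nlast.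
exists (N ++ ([::] ++ w)); exists N, ([::] ++ w); split => //; split => //.
exists [::], w; split => //; split => //.
by exists [::].
Qed.

Lemma merge (D S : Type) (phi : D -> lang S) (NS : seq (seq D * ufregex D)) Nlast :
  (forall p, Stdlib.Lists.List.In p NS -> forall w, uflang p.2 w -> subst_word phi w [::]) ->
  forall u v, block_lang NS Nlast u -> block_lang NS Nlast v ->
  exists w, block_lang NS Nlast w /\ (forall x, subst_word phi u x -> subst_word phi w x)
    /\ (forall x, subst_word phi v x -> subst_word phi w x).
Proof.
elim: NS => [|[N Sr] NS IH] Heps u v /=.
  by move=> -> ->; exists Nlast.
move=> [u1 [u2 [Eu [Eu1 [s [b [Eu2 [Hs Hb]]]]]]]].
move=> [v1 [v2 [Ev [Ev1 [s' [b' [Ev2 [Hs' Hb']]]]]]]].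
rewrite /lword in Eu1 Ev1; subst u v u1 v1 u2 v2.
have He : forall w, uflang Sr w -> subst_word phi w [::].
  by apply: (Heps (N, Sr)); left.
have [b'' [Hb'' [H1 H2]]] := IH (fun p Hp => Heps p (or_intror Hp)) b b' Hb Hb'.
exists (N ++ ((s ++ s') ++ b'')); split.
  exists N, ((s ++ s') ++ b''); split => //; split => //.
  exists (s ++ s'), b''; split => //; split => //.
  case: Hs => [ws [Hws Ews]]; case: Hs' => [ws' [Hws' Ews']].
  exists (ws ++ ws'); rewrite Ews Ews' flatten_cat; split => // y Hy; case: (Stdlib.Lists.List.in_app_or _ _ _ Hy).
    by apply: Hws.
  by apply: Hws'.
have Es := @eps_star _ _ phi Sr s He Hs; have Es' := @eps_star _ _ phi Sr s' He Hs'.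
split=> x /sw_cat [xN [xr [-> [HN /sw_cat [xs [xb [-> [Hxs Hxb]]]]]]]];
  apply/sw_cat; exists xN, (xs ++ xb); split => //; split => //;
  apply/sw_cat; exists xs, xb; split => //; split; [|by auto| |by auto].
- by apply/sw_cat; exists xs, [::]; rewrite cats0.
- by apply/sw_cat; exists [::], xs.
Qed.

Theorem proposition14 (Delta Sigma : finType) (phi : Delta -> lang Sigma)
  (NS : seq (seq Delta * ufregex Delta)) (Nlast : seq Delta) :
  regular_subst phi ->
  union_free (block_lang NS Nlast) ->
  (forall p, Stdlib.Lists.List.In p NS -> forall w, uflang p.2 w -> subst_word phi w [::]) ->
  one_word_summaries phi (block_lang NS Nlast).
Proof.
move=> _ _ Heps F.
elim: F => [|u F IH] HF.
  have [w Hw] := @block_nonempty _ NS Nlast.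
  by exists w; split => // x [u [[] _]].
have [w0 [Hw0 H0]] := IH (fun y Hy => HF y (or_intror Hy)).
have [w [Hw [H1 H2]]] := @merge _ _ phi NS Nlast Heps _ _ (HF u (or_introl erefl)) Hw0.
exists w; split => // x [u' [[<-|Hu'] Hx]].
  by apply: H1.
by apply: H2; apply: H0; exists u'.
Qed.
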